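(* Assume $a^2\rho(\mathbf P_1\mathbf E)<1$, let $\theta\in\mathbb N$ and $\mathcal X\ge0$. For every reception index $j$ and every channel state $\gamma_{S_j}$, if $x_{S_j}^2\ge\mathcal X$ then $$\mathcal J_{S_j}^\theta\le\mathbf Q_{\mathcal X}(\theta)\,\mathbf P_0^{\theta-1}\mathbf P_1\boldsymbol\delta_{\gamma_{S_j}},$$ where $\mathbf Q_{\mathcal X}(\theta):=\big[\mathcal Z_\theta(\bar a^2)-\mathcal Z_\theta(c^2)\big]\max\{\mathcal X,Bc^{-2\theta}\}+\bar M\big[\mathcal Z_\theta(a^2)-\mathcal Z_\theta(1)\big]$ and $\mathcal Z_\theta(b):=b^\theta\mathbf d^T(\mathbf I-b\mathbf P_1\mathbf E)^{-1}$.
   Context: Setup. Fix reals $a,L$ with $|a|>1$ and $\bar a:=a+L$ satisfying $0<\bar a^2<1$; fix $c$ with $\bar a^2<c^2<1$, $M>0$, $B>0$, and $\bar M:=M/(a^2-1)$. Plant $x_{k+1}=ax_k+u_k+v_k$, $v_k$ i.i.d., mean $0$, variance $M$, independent of everything else. Sensor decisions $t_k\in\{0,1\}$, receptions $r_k\in\{0,1\}$ ($r_k=0$ if $t_k=0$). Controller $u_k=L\hat x_k^+$, $\hat x_k:=\bar a\hat x_{k-1}^+$, $\hat x_k^+:=x_k$ if $r_k=1$, else $\hat x_k$. Channel state $\gamma_k\in\{1,\dots,n\}$ with $\Pr[\gamma_{k+1}=i\mid\gamma_k=j,t_k=\ell]=(\mathbf P_\ell)_{ij}$, $\mathbf P_0,\mathbf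 P_1$ column-stochastic; drop probabilities $\mathbf e\in[0,1]^n$ (if $t_k=1$, $r_k=1$ w.p. $1-e_{\gamma_k}$); $\mathbf E:=\mathrm{diag}(\mathbf e)$, $\mathbf d:=\mathbf 1-\mathbf e$, $\mathbf P^0:=\mathbf I$, $\boldsymbol\delta_i$ standard basis vectors, $\rho$ spectral radius. $r_0=1$; $R_k:=\max\{i<k:r_i=1\}$; $S_0:=0$, $S_{j+1}:=\min\{k>S_j:r_k=1\}$. $I_k^+$ is the post-transmission information at time $k$, which at a reception time $S_j$ contains $x_{S_j}$, $z^+_{S_j}=0$, $S_j$, $\gamma_{S_j}$. Performance function $h_k:=x_k^2-\max\{c^{2(k-R_k)}x_{R_k}^2,B\}$. Nominal policy $\mathcal T_k^D$: $t_i=0$ for $k\le i\le k+D-1$, $t_i=1$ for $i\ge k+D$. Performance-evaluation function: $\mathcal J_{S_j}^\theta:=\mathbb E_{\mathcal T^{\theta-1}_{S_j+1}}[h_{S_{j+1}}\mid I_{S_j}^+]=\sum_{w\ge\theta}H(w,x_{S_j}^2)\,\mathbf d^T(\mathbf P_1\mathbf E)^{w-\theta}\mathbf P_0^{\theta-1}\mathbf P_1\boldsymbol\delta_{\gamma_{S_j}}$, where $H(w,y):=\bar a^{2w}y+\bar M(a^{2w}-1)-\max\{c^{2w}y,B\}$. *)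

(* Defs.v *)
(* classical reals. Matrices of size n are represented as
   functions nat -> nat -> R, only indices < n being meaningful. *)
From Stdlib Require Import Reals Lra ClassicalEpsilon.
Open Scope R_scope.

Definition Vec := nat -> R.
Definition Mat := nat -> nat -> R.

Fixpoint rsum (n : nat) (f : nat -> R) : R :=
  match n with
  | O => 0
  | S k => rsum k f + f k
  end.

Definition idm : Mat := fun i j => if Nat.eq_dec i j then 1 else 0.
Definition diagm (e : Vec) : Mat := fun i j => if Nat.eq_dec i j then e i else 0.
Definition msub (A B : Mat) : Mat := fun i j => A i j - B i j.
Definition mscal (b : R) (A : Mat) : Mat := fun i j => b * A i j.
Definition mmul (n : nat) (A B : Mat) : Mat :=
  fun i j => rsum n (fun k => A i k * B k j).
Fixpoint mpow (n : nat) (A : Mat) (k : nat) : Mat :=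
  match k with
  | O => idm
  | S k' => mmul n A (mpow n A k')
  end.

Definition col_stochastic (n : nat) (P : Mat) : Prop :=
  (forall i j, (i < n)%nat -> (j < n)%nat -> 0 <= P i j) /\
  (forall j, (j < n)%nat -> rsum n (fun i => P i j) = 1).

(* matrix inverse (chosen by epsilon; meaningful when M is invertible) *)
Definition is_inverse (n : nat) (M N : Mat) : Prop :=
  forall i j, (i < n)%nat -> (j < n)%nat ->
    mmul n M N i j = idm i j /\ mmul n N M i j = idm i j.

Definition matinv (n : nat) (M : Mat) : Mat :=
  epsilon (inhabits idm) (fun N => is_inverse n M N).

(* (re, im) is a complex eigenvalue of the real matrix A: there is a nonzero
   complex vector u + i w with A (u + i w) = (re + i im)(u + i w). *)
Definition is_eigenvalue (n : nat) (A : Mat) (re im : R) : Prop :=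
  exists u w : Vec,
    (exists i, (i < n)%nat /\ (u i <> 0 \/ w i <> 0)) /\
    (forall i, (i < n)%nat ->
       rsum n (fun k => A i k * u k) = re * u i - im * w i /\
       rsum n (fun k => A i k * w k) = im * u i + re * w i).

Definition spec_radius (n : nat) (A : Mat) : R :=
  epsilon (inhabits 0)
    (is_lub (fun m => exists re im, is_eigenvalue n A re im /\
                                    m = sqrt (re ^ 2 + im ^ 2))).

Definition Zvec (n : nat) (d : Vec) (P1E : Mat) (theta : nat) (b : R) : Vec :=
  fun j => b ^ theta *
    rsum n (fun i => d i * matinv n (msub idm (mscal b P1E)) i j).

Definition Hfun (abar c Mbar B a : R) (w : nat) (y : R) : R :=
  abar ^ (2 * w) * y + Mbar * (a ^ (2 * w) - 1) - Rmax (c ^ (2 * w) * y) B.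

(* Main.v *)
Require Import Defs.
From Stdlib Require Import Reals Lra Lia FunctionalExtensionality ClassicalEpsilon.
Open Scope R_scope.


Lemma rec_boundR (nz R0 C : R) (nt nu : nat -> R) : 0 <= nz -> nz < R0 ->
  (forall k, 0 <= nt k) -> (forall k, 0 <= nu k) ->
  (forall k, nt (S k) <= nz * nt k + nu k) -> (forall k, nu k <= C * R0^k) ->
  exists D, forall k, nt k <= D * R0^k.
Proof.
intros H0 H1 Hnt Hnu Hrec Hb.
assert (HC : 0 <= C) by (specialize (Hb 0%nat); specialize (Hnu 0%nat); simpl in Hb; lra).
set (q := C / (R0 - nz)).
assert (Hq : q * (R0 - nz) = C) by (unfold q; field; lra).
assert (Hq0 : 0 <= q) by (unfold q; apply Rmult_le_pos; [lra| left; apply Rinv_0_lt_compat; lra]).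
exists (nt 0%nat + q).
induction k as [|k IH].
- simpl. specialize (Hnt 0%nat). lra.
- assert (Hp : 0 <= R0 ^ k) by (apply pow_le; lra).
  specialize (Hrec k). specialize (Hb k). specialize (Hnt 0%nat). simpl.
  assert (nz * nt k <= nz * ((nt 0%nat + q) * R0 ^ k)) by (apply Rmult_le_compat_l; lra).
  assert (E : (nt 0%nat + q) * (R0 * R0 ^ k) - (nz * ((nt 0%nat + q) * R0 ^ k) + C * R0 ^ k)
     = nt 0%nat * (R0 - nz) * R0 ^ k) by (rewrite <- Hq; ring).
  assert (0 <= nt 0%nat * (R0 - nz) * R0 ^ k) by (apply Rmult_le_pos; [apply Rmult_le_pos|]; lra).
  lra.
Qed.


Module MC.
From mathcomp Require Import all_boot all_order all_algebra.
From mathcomp Require Import ring.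
From mathcomp Require Import complex Rstruct.
Import Order.TTheory GRing.Theory Num.Theory.
Local Open Scope ring_scope.
Local Open Scope complex_scope.


Lemma rsum_big (n : nat) (f : nat -> R) : rsum n f = \sum_(i < n) f i.
Proof.
elim: n => [|n IH] /=; first by rewrite big_ord0.
by rewrite big_ord_recr /= IH.
Qed.

Lemma cE (x : R[i]) : x = (complex.Re x) +i* (complex.Im x).
Proof. by case: x. Qed.

Lemma csum_mul (m : nat) (F G H : nat -> R) :
  \sum_(l < m) ((F l)%:C * (G l +i* H l)) =
  (\sum_(l<m) F l * G l) +i* (\sum_(l<m) F l * H l).
Proof.
elim: m => [|m IH]; first by rewrite !big_ord0.
rewrite !big_ord_recr /= IH.
apply/eqP; rewrite eq_complex /=; apply/andP; split; apply/eqP; ring.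
Qed.


Section Mx.
Variable n' : nat.
Local Notation n := n'.+1.
Variable A : Mat.
Definition Am : 'M[R[i]]_n := \matrix_(i, j) (A i j)%:C.

Lemma Am_pow k (i j : 'I_n) : (Am ^+ k) i j = (mpow n A k i j)%:C.
Proof.
elim: k i j => [|k IH] i j.
  rewrite expr0 /= /idm !mxE.
  case: eqVneq => [->|Hne]; case: Nat.eq_dec => // H.
  by move: Hne; rewrite (val_inj H) eqxx.
rewrite exprS -mulmxE mxE /= /mmul rsum_big rmorph_sum /=.
apply: eq_bigr => l _; rewrite IH mxE rmorphM /=.
by [].
Qed.
End Mx.


Lemma char_poly_trmx (F : fieldType) n (M : 'M[F]_n) : char_poly M^T = char_poly M.
Proof.
rewrite /char_poly -[in RHS]det_tr. congr (determinant _).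
rewrite /char_poly_mx. apply/matrixP => i j; rewrite !mxE.
by rewrite eq_sym.
Qed.

Section Eig.
Variable n' : nat.
Local Notation n := n'.+1.
Variable A : Mat.

Lemma root_eig (z : R[i]) : root (char_poly (Am n' A)) z ->
  is_eigenvalue n A (complex.Re z) (complex.Im z).
Proof.
rewrite -char_poly_trmx -eigenvalue_root_char => /eigenvalueP [v Hv Hnz].
pose u := fun l : nat => complex.Re (v 0 (inord l)).
pose w := fun l : nat => complex.Im (v 0 (inord l)).
have vE : forall l : 'I_n, v 0 l = u l +i* w l.
  by move=> l; rewrite /u /w inord_val -cE.
exists u, w; split.
  case: (pickP (fun l : 'I_n => v 0 l != 0)) => [l Hl | H].
    exists l; split; first exact/ssrnat.ltP/ltn_ord.
    case: (Req_EM_T (u l) 0) => Hu; last by left.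
    case: (Req_EM_T (w l) 0) => Hw; last by right.
    by move: Hl; rewrite vE Hu Hw eqxx.
  case/negP: Hnz; apply/eqP/matrixP => i l; rewrite ord1 !mxE.
  by move/negbFE/eqP: (H l).
move=> i /ssrnat.ltP Hi.
have := congr1 (fun M : 'rV[R[i]]_n => M ord0 (inord i)) Hv; rewrite !mxE.
under eq_bigr => l _ do rewrite !mxE vE mulrC.
rewrite csum_mul (vE (inord i)) inordK // (cE z).
move=> [H1 H2].
rewrite !rsum_big; split.
  by rewrite H1.
by rewrite H2 /= addrC.
Qed.

Lemma eig_root re im : is_eigenvalue n A re im ->
  root (char_poly (Am n' A)) (re +i* im).
Proof.
move=> [u [w [[i0 [Hi0 Hnz]] Heq]]].
rewrite -char_poly_trmx -eigenvalue_root_char; apply/eigenvalueP.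
exists (\row_l (u l +i* w l)).
  apply/rowP => j; rewrite !mxE.
  under eq_bigr => l _ do rewrite !mxE mulrC.
  rewrite csum_mul.
  have [H1 H2] := Heq j (ssrnat.ltP (ltn_ord j)).
  rewrite !rsum_big in H1 H2.
  rewrite H1 H2 /=.
  apply/eqP; rewrite eq_complex /= ?RplusE ?RminusE ?RmultE; apply/andP; split; apply/eqP; ring.
apply/negP => /eqP/rowP /(_ (inord i0)); rewrite !mxE inordK; last exact/ssrnat.ltP.
by move=> [Hu Hw]; case: Hnz.
Qed.
End Eig.


Lemma normc_ge0' (x : R[i]) : Rle 0 (Normc.normc x).
Proof. case: x => a b; apply/RleP; rewrite /Normc.normc; exact: sqrtr_ge0. Qed.

Section Dec.
Variable n' : nat.
Local Notation n := n'.+1.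
Variable M : 'M[R[i]]_n.
Variable R0 : R.

Lemma prod_bound (rs : seq R[i]) :
  (forall z, z \in rs -> Rlt (Normc.normc z) R0) ->
  forall N : 'M[R[i]]_n, N *m \prod_(z <- rs) (M - z%:M) = 0 ->
  forall i j, exists C, forall k, Rle (Normc.normc ((N *m M ^+ k) i j)) (Rmult C (pow R0 k)).
Proof.
elim: rs => [|x rs IH] Hrs N HN i j.
  rewrite big_nil mulmx1 in HN; exists 0%R => k.
  rewrite HN mul0mx mxE Rmult_0_l.
  by rewrite /Normc.normc /= expr0n /= addr0 sqrtr0; apply Rle_refl.
rewrite big_cons in HN.
have HN' : (N *m (M - x%:M)) *m \prod_(z <- rs) (M - z%:M) = 0 by rewrite -mulmxA; exact HN.
have Hx : Rlt (Normc.normc x) R0 by apply: Hrs; rewrite inE eqxx.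
have Hrs' : forall z, z \in rs -> Rlt (Normc.normc z) R0.
  by move=> z Hz; apply: Hrs; rewrite inE Hz orbT.
have [C HC] := IH Hrs' _ HN' i j.
pose t := fun k => (N *m M ^+ k) i j.
pose u := fun k => ((N *m (M - x%:M)) *m M ^+ k) i j.
have Hrec : forall k, t k.+1 = x * t k + u k.
  move=> k; rewrite /t /u exprS -mulmxE mulmxA mulmxBr mulmxBl mul_mx_scalar.
  rewrite -scalemxAl !mxE; ring.
have Hin : forall k, Rle (Normc.normc (t k.+1))
   (Rplus (Rmult (Normc.normc x) (Normc.normc (t k))) (Normc.normc (u k))).
  move=> k; rewrite Hrec; apply/RleP.
  apply: le_trans (le_normcD _ _) _.
  by rewrite Normc.normcM.
have [D HD] := rec_boundR (Normc.normc x) R0 C (fun k => Normc.normc (t k))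
  (fun k => Normc.normc (u k)) (normc_ge0' x) Hx (fun k => normc_ge0' _)
  (fun k => normc_ge0' _) Hin HC.
by exists D.
Qed.
End Dec.


Lemma normc_real (x : R) : Normc.normc (x%:C) = Rabs x.
Proof. by rewrite /Normc.normc /= expr0n /= addr0 sqrtr_sqr. Qed.

Lemma normc_sqrt (z : R[i]) :
  Normc.normc z = sqrt (Rplus (pow (complex.Re z) 2) (pow (complex.Im z) 2)).
Proof. by case: z => a b; rewrite RsqrtE !RpowE. Qed.

Lemma char_split n' (A : Mat) : exists rs : seq R[i],
  char_poly (Am n' A) = \prod_(z <- rs) ('X - z%:P).
Proof.
have [rs Hrs] := closed_field_poly_normal (char_poly (Am n' A)).
by exists rs; rewrite Hrs (monicP (char_poly_monic _)) scale1r.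
Qed.

Lemma decay n' (A : Mat) (R0 : R) :
  (forall re im, is_eigenvalue n'.+1 A re im ->
     Rlt (sqrt (Rplus (pow re 2) (pow im 2))) R0) ->
  forall i j, (i < n'.+1)%coq_nat -> (j < n'.+1)%coq_nat ->
  exists C, forall k, Rle (Rabs (mpow n'.+1 A k i j)) (Rmult C (pow R0 k)).
Proof.
move=> H i j /ssrnat.ltP Hi /ssrnat.ltP Hj.
have [rs Hrs] := char_split n' A.
have Hz : forall z, z \in rs -> Rlt (Normc.normc z) R0.
  move=> z Hz; rewrite normc_sqrt; apply: H; apply: root_eig.
  by rewrite Hrs root_prod_XsubC.
have HC : 1 *m \prod_(z <- rs) (Am n' A - z%:M) = 0.
  rewrite mul1mx; have := Cayley_Hamilton (Am n' A); rewrite Hrs rmorph_prod.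
  by under eq_bigr => z _ do rewrite rmorphB /= horner_mx_X horner_mx_C.
have [C HCb] := prod_bound n' (Am n' A) R0 rs Hz 1 HC (inord i) (inord j).
exists C => k; have := HCb k.
by rewrite mul1mx Am_pow normc_real !inordK //; apply/ssrnat.ltP.
Qed.

Lemma eig_bounded n' (A : Mat) : exists Bd, forall re im,
  is_eigenvalue n'.+1 A re im -> Rle (sqrt (Rplus (pow re 2) (pow im 2))) Bd.
Proof.
have [rs Hrs] := char_split n' A.
exists (\sum_(z <- rs) Normc.normc z) => re im He.
have := eig_root n' A re im He; rewrite Hrs root_prod_XsubC => Hin.
have -> : sqrt (Rplus (pow re 2) (pow im 2)) = Normc.normc (re +i* im).
  by rewrite normc_sqrt.
apply/RleP; rewrite (big_rem _ Hin) /= lerDl.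
by apply: sumr_ge0 => z _; apply/RleP; apply: normc_ge0'.
Qed.

End MC.

Module ST.
From Coquelicot Require Import Coquelicot.
Import MC.


Lemma rsum_ext m f g : (forall i, (i < m)%nat -> f i = g i) -> rsum m f = rsum m g.
Proof. induction m; simpl; intros H; auto. rewrite IHm by (intros; apply H; lia). rewrite H by lia. auto. Qed.

Lemma rsum_plus m f g : rsum m (fun i => f i + g i) = rsum m f + rsum m g.
Proof. induction m; simpl; [ring|rewrite IHm; ring]. Qed.

Lemma rsum_minus m f g : rsum m (fun i => f i - g i) = rsum m f - rsum m g.
Proof. induction m; simpl; [ring|rewrite IHm; ring]. Qed.

Lemma rsum_scal m c f : rsum m (fun i => c * f i) = c * rsum m f.
Proof. induction m; simpl; [ring|rewrite IHm; ring]. Qed.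

Lemma rsum_swap m p (f : nat -> nat -> R) :
  rsum m (fun i => rsum p (fun j => f i j)) = rsum p (fun j => rsum m (fun i => f i j)).
Proof.
induction m; simpl.
- induction p; simpl; auto. rewrite <- IHp. ring.
- rewrite IHm. rewrite <- rsum_plus. reflexivity.
Qed.

Lemma rsum_nonneg m f : (forall i, (i < m)%nat -> 0 <= f i) -> 0 <= rsum m f.
Proof. induction m; simpl; intros H; [lra|]. assert (0 <= f m) by (apply H; lia).
assert (0 <= rsum m f) by (apply IHm; intros; apply H; lia). lra. Qed.

Lemma rsum_idm_r m f j : (j < m)%nat -> rsum m (fun l => f l * idm l j) = f j.
Proof.
induction m; intros Hj; [lia|]. simpl. unfold idm at 2.
destruct (Nat.eq_dec m j) as [->|Hne].
- rewrite (rsum_ext _ _ (fun _ => 0)). 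
  + assert (rsum j (fun _ => 0) = 0) by (clear; induction j; simpl; [auto|rewrite IHj; ring]). lra.
  + intros i Hi. unfold idm. destruct (Nat.eq_dec i j); [lia|ring].
- rewrite IHm by lia. ring.
Qed.

Lemma rsum_idm_l m f i : (i < m)%nat -> rsum m (fun l => idm i l * f l) = f i.
Proof.
intros H. rewrite <- (rsum_idm_r m f i H). apply rsum_ext. intros l _.
unfold idm. destruct (Nat.eq_dec i l), (Nat.eq_dec l i); subst; try lia; ring.
Qed.

Lemma mmul_assoc n A B C : mmul n (mmul n A B) C = mmul n A (mmul n B C).
Proof.
apply functional_extensionality; intro i. apply functional_extensionality; intro j.
unfold mmul.
transitivity (rsum n (fun l => rsum n (fun k => A i k * B k l * C l j))).
- apply rsum_ext; intros l _. rewrite Rmult_comm, <- rsum_scal. apply rsum_ext. intros; ring.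
- rewrite rsum_swap. apply rsum_ext; intros k _. rewrite <- rsum_scal. apply rsum_ext. intros; ring.
Qed.

Lemma mmul_ext_r n X Z W i j : (j < n)%nat ->
  (forall l, (l < n)%nat -> Z l j = W l j) -> mmul n X Z i j = mmul n X W i j.
Proof. intros Hj H. unfold mmul. apply rsum_ext. intros l Hl. rewrite H by lia. auto. Qed.

Lemma mmul_ext_l n X Y Z i j : (i < n)%nat ->
  (forall l, (l < n)%nat -> X i l = Y i l) -> mmul n X Z i j = mmul n Y Z i j.
Proof. intros Hi H. unfold mmul. apply rsum_ext. intros l Hl. rewrite H by lia. auto. Qed.

Lemma mpow_S' n A k i j : (i < n)%nat -> (j < n)%nat ->
  mpow n A (S k) i j = mmul n (mpow n A k) A i j.
Proof.
revert i j. induction k; intros i j Hi Hj.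
- simpl. unfold mmul at 1 2. rewrite rsum_idm_r by auto. rewrite rsum_idm_l by auto. auto.
- change (mpow n A (S (S k)) i j) with (mmul n A (mpow n A (S k)) i j).
  rewrite (mmul_ext_r n A _ (mmul n (mpow n A k) A)) by (auto; intros; apply IHk; auto).
  rewrite <- mmul_assoc. reflexivity.
Qed.


Lemma is_series_zero : is_series (fun _ : nat => 0) 0.
Proof.
assert (H := is_series_scal_l 0 _ _ (is_series_geom (1/2) ltac:(rewrite Rabs_pos_eq; lra))).
change (is_series (fun k => 0 * (1/2)^k) (0 * / (1 - 1/2))) in H. rewrite Rmult_0_l in H.
eapply is_series_ext; [|exact H]. intros k; simpl. change (0 * ((1/2)^k) = 0). apply Rmult_0_l.
Qed.

Lemma is_series_mulc c a l : is_series a l -> is_series (fun k => c * a k) (c * l).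
Proof. intros H. exact (is_series_scal_l c a l H). Qed.

Lemma is_series_rsum m (f : nat -> nat -> R) (l : nat -> R) :
  (forall i, (i < m)%nat -> is_series (fun k => f i k) (l i)) ->
  is_series (fun k => rsum m (fun i => f i k)) (rsum m l).
Proof.
induction m; intros H; simpl.
- apply is_series_zero.
- apply (is_series_plus (fun k => rsum m (fun i => f i k)) (fun k => f m k)).
  + apply IHm. intros; apply H; lia.
  + apply H; lia.
Qed.

Lemma ex_series_geom_bound (u : nat -> R) C q : 0 <= q < 1 ->
  (forall k, Rabs (u k) <= C * q ^ k) -> ex_series u.
Proof.
intros Hq H. apply (ex_series_le u (fun k => C * q ^ k)).
- intros k. apply H.
- apply (ex_series_scal_l C (fun k => q ^ k)). apply ex_series_geom. rewrite Rabs_pos_eq; lra.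
Qed.

Lemma neumann n A b R0 : 0 <= R0 -> Rabs b * R0 < 1 ->
  (forall i j, (i < n)%nat -> (j < n)%nat -> exists C, forall k, Rabs (mpow n A k i j) <= C * R0 ^ k) ->
  forall i j, (i < n)%nat -> (j < n)%nat ->
  is_series (fun k => b ^ k * mpow n A k i j) (matinv n (msub idm (mscal b A)) i j).
Proof.
intros HR0 Hb Hbd.
assert (Hex : forall i j, (i < n)%nat -> (j < n)%nat -> ex_series (fun k => b ^ k * mpow n A k i j)).
{ intros i j Hi Hj. destruct (Hbd i j Hi Hj) as [C HC].
  apply (ex_series_geom_bound _ C (Rabs b * R0)).
  - split; [apply Rmult_le_pos; [apply Rabs_pos|lra]|lra].
  - intros k. rewrite Rabs_mult, <- RPow_abs, Rpow_mult_distr.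
    specialize (HC k). assert (0 <= Rabs b ^ k) by (apply pow_le; apply Rabs_pos).
    replace (C * (Rabs b ^ k * R0 ^ k)) with (Rabs b ^ k * (C * R0 ^ k)) by ring.
    apply Rmult_le_compat_l; auto. }
set (SS := fun i j => Series (fun k => b ^ k * mpow n A k i j)).
assert (HS : forall i j, (i < n)%nat -> (j < n)%nat -> is_series (fun k => b ^ k * mpow n A k i j) (SS i j)).
{ intros i j Hi Hj. apply Series_correct. auto. }
set (M := msub idm (mscal b A)).
assert (Hshift : forall i j X, (i < n)%nat -> (j < n)%nat ->
   is_series (fun k => b ^ k * mpow n A (S k) i j) X -> b * X = SS i j - idm i j).
{ intros i j X Hi Hj HX.
  apply is_series_mulc with (c := b) in HX.
  assert (H1 := is_series_incr_1 (fun k => b ^ k * mpow n A k i j) (SS i j - idm i j)).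
  assert (H2 : is_series (fun k => b ^ k * mpow n A k i j) (plus (SS i j - idm i j) (b ^ 0 * mpow n A 0 i j))).
  { replace (plus (SS i j - idm i j) (b ^ 0 * mpow n A 0 i j)) with (SS i j)
      by (simpl; change (plus (SS i j - idm i j) (1 * idm i j)) with (SS i j - idm i j + 1 * idm i j); ring).
    apply HS; auto. }
  specialize (H1 H2).
  assert (HX' : is_series (fun k => b ^ (S k) * mpow n A (S k) i j) (b * X)).
  { eapply is_series_ext; [|exact HX]. intros k. simpl. ring. }
  rewrite <- (is_series_unique _ _ HX'). apply is_series_unique. exact H1. }
assert (Hinv : is_inverse n M SS).
{ intros i j Hi Hj. split.
  - unfold mmul, M, msub, mscal.
    rewrite (rsum_ext _ _ (fun l => idm i l * SS l j - b * (A i l * SS l j))) by (intros; ring).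
    rewrite rsum_minus, rsum_scal, rsum_idm_l by auto.
    assert (HX : is_series (fun k => b ^ k * mpow n A (S k) i j) (rsum n (fun l => A i l * SS l j))).
    { eapply is_series_ext; [|apply (is_series_rsum n (fun l k => A i l * (b ^ k * mpow n A k l j)))].
      - intros k. simpl. unfold mmul. rewrite <- rsum_scal. apply rsum_ext. intros; ring.
      - intros l Hl. apply is_series_mulc. apply HS; auto. }
    rewrite (Hshift i j _ Hi Hj HX). ring.
  - unfold mmul, M, msub, mscal.
    rewrite (rsum_ext _ _ (fun l => SS i l * idm l j - b * (A l j * SS i l))) by (intros; ring).
    rewrite rsum_minus, rsum_scal, rsum_idm_r by auto.
    assert (HX : is_series (fun k => b ^ k * mpow n A (S k) i j) (rsum n (fun l => A l j * SS i l))).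
    { eapply is_series_ext; [|apply (is_series_rsum n (fun l k => (b ^ k * mpow n A k i l) * A l j))].
      - intros k. rewrite mpow_S' by auto. unfold mmul. rewrite <- rsum_scal. apply rsum_ext. intros; ring.
      - intros l Hl. eapply is_series_ext; [|apply (is_series_mulc (A l j)); apply HS; auto].
        intros; simpl; ring. }
    rewrite (Hshift i j _ Hi Hj HX). ring. }
intros i j Hi Hj.
assert (Heps : is_inverse n M (matinv n M)).
{ unfold matinv. apply epsilon_spec. exists SS. exact Hinv. }
replace (matinv n M i j) with (SS i j). { apply HS; auto. }
set (N := matinv n M).
transitivity (mmul n (mmul n N M) SS i j).
- unfold mmul at 1. rewrite (rsum_ext _ _ (fun l => idm i l * SS l j)).
  + rewrite rsum_idm_l; auto.
  + intros l Hl. f_equal. apply (proj2 (Heps i l Hi Hl)).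
- rewrite mmul_assoc. unfold mmul at 1.
  rewrite (rsum_ext _ _ (fun l => N i l * idm l j)).
  + rewrite rsum_idm_r; auto.
  + intros l Hl. f_equal. apply (proj1 (Hinv l j Hl Hj)).
Qed.


Lemma pow_le_one' x k : 0 <= x <= 1 -> x ^ k <= 1.
Proof. intros H. induction k; simpl; [lra|]. assert (0 <= x ^ k) by (apply pow_le; lra). nra. Qed.

Lemma H_bound (ab c Mb B a y X : R) (th w : nat) :
  0 < ab ^ 2 -> ab ^ 2 < c ^ 2 -> c ^ 2 < 1 -> 0 < B -> 0 <= X -> X <= y -> (th <= w)%nat ->
  Hfun ab c Mb B a w y <=
  Rmax X (B / c ^ (2 * th)) * ((ab ^ 2) ^ w - (c ^ 2) ^ w) + Mb * ((a ^ 2) ^ w - 1).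
Proof.
intros H1 H2 H3 HB HX Hy Hw. unfold Hfun. rewrite !pow_mult.
set (P := (ab ^ 2) ^ w). set (Cw := (c ^ 2) ^ w). set (Ct := (c ^ 2) ^ th).
assert (HP : 0 < P) by (apply pow_lt; lra).
assert (HPC : P <= Cw) by (apply pow_incr; split; [lra|lra]).
assert (HCt : 0 < Ct) by (apply pow_lt; lra).
assert (HCw : Cw <= Ct).
{ unfold Cw. replace w with (th + (w - th))%nat by lia. rewrite pow_add. fold Ct.
  assert (0 <= (c ^ 2) ^ (w - th) <= 1) by (split; [apply pow_le; nra| apply pow_le_one'; nra]).
  assert (Ct * (c ^ 2) ^ (w - th) <= Ct * 1) by (apply Rmult_le_compat_l; lra). lra. }
assert (HBC : B / Ct * Ct = B) by (field; lra).
assert (HBC0 : 0 < B / Ct) by (apply Rdiv_lt_0_compat; lra).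
assert (Hmax1 : Cw * y <= Rmax (Cw * y) B) by apply Rmax_l.
assert (Hmax2 : B <= Rmax (Cw * y) B) by apply Rmax_r.
destruct (Rle_dec (B / Ct) X) as [HXB|HXB].
- rewrite (Rmax_left X) by lra. assert ((Cw - P) * X <= (Cw - P) * y) by (apply Rmult_le_compat_l; lra). lra.
- rewrite (Rmax_right X) by lra.
  destruct (Rle_dec (B / Ct) y) as [Hy2|Hy2].
  + assert ((Cw - P) * (B / Ct) <= (Cw - P) * y) by (apply Rmult_le_compat_l; lra). lra.
  + assert (P * y <= P * (B / Ct)) by (apply Rmult_le_compat_l; lra).
    assert (Cw * (B / Ct) <= Ct * (B / Ct)) by (apply Rmult_le_compat_r; lra). lra.
Qed.

Lemma series_nonneg a l : is_series a l -> (forall k, 0 <= a k) -> 0 <= l.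
Proof.
intros H Hp. rewrite <- (is_series_unique _ _ H).
rewrite <- (is_series_unique _ _ is_series_zero).
apply Series_le; [intros; split; [lra| apply Hp]| eexists; exact H].
Qed.


Lemma is_series_plusR a b la lb : is_series a la -> is_series b lb ->
  is_series (fun k => a k + b k) (la + lb).
Proof. intros H1 H2. exact (is_series_plus a b la lb H1 H2). Qed.

Lemma is_series_minusR a b la lb : is_series a la -> is_series b lb ->
  is_series (fun k => a k - b k) (la - lb).
Proof. intros H1 H2. exact (is_series_minus a b la lb H1 H2). Qed.

Lemma mmul_nonneg n X Y : (forall i j, (i < n)%nat -> (j < n)%nat -> 0 <= X i j) ->
  (forall i j, (i < n)%nat -> (j < n)%nat -> 0 <= Y i j) ->
  forall i j, (i < n)%nat -> (j < n)%nat -> 0 <= mmul n X Y i j.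
Proof. intros HX HY i j Hi Hj. apply rsum_nonneg. intros l Hl. apply Rmult_le_pos; auto. Qed.

Lemma mpow_nonneg n A : (forall i j, (i < n)%nat -> (j < n)%nat -> 0 <= A i j) ->
  forall k i j, (i < n)%nat -> (j < n)%nat -> 0 <= mpow n A k i j.
Proof.
intros HA k. induction k; intros i j Hi Hj; simpl.
- unfold idm. destruct (Nat.eq_dec i j); lra.
- apply mmul_nonneg; auto.
Qed.

Theorem main7
  (n : nat) (a L c M B : R) (P0 P1 : Mat) (e : Vec)
  (Hn : (1 <= n)%nat)
  (Ha : 1 < Rabs a)
  (Habar0 : 0 < (a + L) ^ 2) (Habar1 : (a + L) ^ 2 < 1)
  (Hc0 : (a + L) ^ 2 < c ^ 2) (Hc1 : c ^ 2 < 1)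
  (HM : 0 < M) (HB : 0 < B)
  (HP0 : col_stochastic n P0) (HP1 : col_stochastic n P1)
  (He : forall i, (i < n)%nat -> 0 <= e i <= 1)
  (Hrho : a ^ 2 * spec_radius n (mmul n P1 (diagm e)) < 1)
  (theta : nat) (Htheta : (1 <= theta)%nat)
  (X : R) (HX : 0 <= X) :
  let abar := a + L in
  let Mbar := M / (a ^ 2 - 1) in
  let d : Vec := fun i => 1 - e i in
  let P1E := mmul n P1 (diagm e) in
  let Z := Zvec n d P1E theta in
  let Q : Vec := fun j =>
    (Z (abar ^ 2) j - Z (c ^ 2) j) * Rmax X (B / c ^ (2 * theta))
    + Mbar * (Z (a ^ 2) j - Z 1 j) in
  let P01 := mmul n (mpow n P0 (theta - 1)) P1 in
  forall (gamma : nat) (y : R), (gamma < n)%nat -> X <= y ->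
    exists J : R,
      infinite_sum
        (fun k => Hfun abar c Mbar B a (theta + k) y *
           rsum n (fun i => d i * mmul n (mpow n P1E k) P01 i gamma))
        J
      /\ J <= rsum n (fun j => Q j * P01 j gamma).
Proof.
intros abar Mbar d P1E Z Q P01 gamma y Hg Hy.
change ((a + L) ^ 2) with (abar ^ 2) in *.
destruct n as [|n']; [lia|].
change (mmul (S n') P1 (diagm e)) with P1E in Hrho.
assert (Ha2 : 1 < a ^ 2).
{ rewrite <- pow2_abs. simpl. nra. }
assert (HP1E : forall i j, (i < S n')%nat -> (j < S n')%nat -> 0 <= P1E i j).
{ apply mmul_nonneg; [apply HP1|]. intros i j Hi Hj. unfold diagm.
  destruct (Nat.eq_dec i j); [apply He; auto| lra]. }
assert (HP01 : forall i j, (i < S n')%nat -> (j < S n')%nat -> 0 <= P01 i j).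
{ apply mmul_nonneg; [apply mpow_nonneg, HP0| apply HP1]. }
set (w := fun k => rsum (S n') (fun i => d i * mmul (S n') (mpow (S n') P1E k) P01 i gamma)).
assert (Hwnn : forall k, 0 <= w k).
{ intros k. apply rsum_nonneg. intros i Hi. apply Rmult_le_pos.
  - unfold d. specialize (He i Hi). lra.
  - apply mmul_nonneg; auto. apply mpow_nonneg; auto. }
assert (Hmod : forall re im, is_eigenvalue (S n') P1E re im ->
          sqrt (re ^ 2 + im ^ 2) <= spec_radius (S n') P1E).
{ intros re im Heig.
  destruct (eig_bounded n' P1E) as [Bd HBd].
  set (E := fun m => exists re im, is_eigenvalue (S n') P1E re im /\ m = sqrt (re ^ 2 + im ^ 2)).
  assert (Hlub : exists m, is_lub E m).
  { destruct (completeness E) as [m Hm].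
    - exists Bd. intros x [r [i [Hx ->]]]. apply HBd; auto.
    - exists (sqrt (re ^ 2 + im ^ 2)), re, im; auto.
    - exists m; auto. }
  assert (H := epsilon_spec (inhabits 0) (is_lub E) Hlub).
  apply (proj1 H). exists re, im; auto. }
set (rho := spec_radius (S n') P1E) in *.
assert (Hrm : a ^ 2 * Rmax rho 0 < 1).
{ unfold Rmax. destruct (Rle_dec rho 0); [rewrite Rmult_0_r|]; lra. }
assert (Hrm0 : 0 <= Rmax rho 0) by apply Rmax_r.
assert (Hia : a ^ 2 * / a ^ 2 = 1) by (apply Rinv_r; lra).
assert (Hia0 : 0 < / a ^ 2) by (apply Rinv_0_lt_compat; lra).
set (R0 := (Rmax rho 0 + / a ^ 2) / 2).
assert (HR0 : 0 < R0) by (unfold R0; lra).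
assert (Ha2R0 : a ^ 2 * R0 < 1) by (unfold R0; nra).
assert (Hlt : forall re im, is_eigenvalue (S n') P1E re im ->
          Rlt (sqrt (Rplus (pow re 2) (pow im 2))) R0).
{ intros re im Heig. specialize (Hmod re im Heig).
  assert (rho <= Rmax rho 0) by apply Rmax_l.
  assert (Rmax rho 0 < / a ^ 2).
  { apply (Rmult_lt_reg_l (a ^ 2)); lra. }
  unfold R0; lra. }
assert (Hbd := decay n' P1E R0 Hlt).
assert (HN : forall b, 0 <= b <= a ^ 2 -> forall i j, (i < S n')%nat -> (j < S n')%nat ->
   is_series (fun k => b ^ k * mpow (S n') P1E k i j) (matinv (S n') (msub idm (mscal b P1E)) i j)).
{ intros b Hb. apply (neumann _ _ _ R0); [lra| |exact Hbd].
  rewrite Rabs_pos_eq by lra. nra. }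
assert (Hw : forall b, 0 <= b <= a ^ 2 ->
   is_series (fun k => b ^ (theta + k) * w k) (rsum (S n') (fun j => Z b j * P01 j gamma))).
{ intros b Hb.
  set (Inv := matinv (S n') (msub idm (mscal b P1E))).
  assert (Hs : is_series
     (fun k => b ^ theta * rsum (S n') (fun i => d i * rsum (S n') (fun j => (b ^ k * mpow (S n') P1E k i j) * P01 j gamma)))
     (b ^ theta * rsum (S n') (fun i => d i * rsum (S n') (fun j => Inv i j * P01 j gamma)))).
  { apply is_series_mulc.
    apply (is_series_rsum (S n') (fun i k => d i * rsum (S n') (fun j => (b ^ k * mpow (S n') P1E k i j) * P01 j gamma))
             (fun i => d i * rsum (S n') (fun j => Inv i j * P01 j gamma))).
    intros i Hi. apply is_series_mulc.
    apply (is_series_rsum (S n') (fun j k => (b ^ k * mpow (S n') P1E k i j) * P01 j gamma)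
             (fun j => Inv i j * P01 j gamma)).
    intros j Hj.
    exact (is_series_scal_r (P01 j gamma) _ _ (HN b Hb i j Hi Hj)). }
  replace (rsum (S n') (fun j => Z b j * P01 j gamma)) with
    (b ^ theta * rsum (S n') (fun i => d i * rsum (S n') (fun j => Inv i j * P01 j gamma))).
  - eapply is_series_ext; [|exact Hs]. intros k.
    rewrite pow_add, Rmult_assoc. apply f_equal. unfold w, mmul.
    rewrite <- rsum_scal. apply rsum_ext. intros i Hi.
    rewrite <- !rsum_scal. apply rsum_ext. intros; ring.
  - transitivity (rsum (S n') (fun j => rsum (S n') (fun i => b ^ theta * (d i * (Inv i j * P01 j gamma))))).
    + rewrite rsum_swap. rewrite <- rsum_scal. apply rsum_ext; intros i _.
      rewrite <- !rsum_scal. apply rsum_ext; intros; ring.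
    + apply rsum_ext; intros j _. unfold Z, Zvec. fold Inv.
      rewrite Rmult_assoc, (Rmult_comm (rsum _ _) (P01 j gamma)), <- !rsum_scal.
      apply rsum_ext; intros; ring. }
assert (Hab : 0 <= abar ^ 2 <= a ^ 2) by lra.
assert (Hcc : 0 <= c ^ 2 <= a ^ 2) by lra.
assert (Haa : 0 <= a ^ 2 <= a ^ 2) by lra.
assert (H11 : 0 <= 1 <= a ^ 2) by lra.
assert (Sab := Hw _ Hab). assert (Sc := Hw _ Hcc). assert (Sa := Hw _ Haa). assert (S1 := Hw _ H11).
set (Sab' := rsum (S n') (fun j => Z (abar ^ 2) j * P01 j gamma)) in *.
set (Sc' := rsum (S n') (fun j => Z (c ^ 2) j * P01 j gamma)) in *.
set (Sa' := rsum (S n') (fun j => Z (a ^ 2) j * P01 j gamma)) in *.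
set (S1' := rsum (S n') (fun j => Z 1 j * P01 j gamma)) in *.
set (U := fun k => y * ((abar ^ 2) ^ (theta + k) * w k) +
          Mbar * ((a ^ 2) ^ (theta + k) * w k - 1 ^ (theta + k) * w k)).
assert (HU : is_series U (y * Sab' + Mbar * (Sa' - S1'))).
{ apply is_series_plusR; apply is_series_mulc; [exact Sab|]. apply is_series_minusR; auto. }
set (V := fun k => Rmax ((c ^ 2) ^ (theta + k) * y) B * w k).
assert (Hy0 : 0 <= y) by lra.
assert (HVex : ex_series V).
{ apply (ex_series_le V (fun k => y * ((c ^ 2) ^ (theta + k) * w k) + B * (1 ^ (theta + k) * w k))).
  - intros k. change (norm (V k)) with (Rabs (V k)). unfold V.
    assert (Hcp : 0 <= (c ^ 2) ^ (theta + k)) by (apply pow_le; lra).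
    assert (HM0 : 0 <= Rmax ((c ^ 2) ^ (theta + k) * y) B) by (apply Rle_trans with B; [lra|apply Rmax_r]).
    rewrite Rabs_pos_eq by (apply Rmult_le_pos; auto).
    rewrite pow1.
    assert (Rmax ((c ^ 2) ^ (theta + k) * y) B <= (c ^ 2) ^ (theta + k) * y + B).
    { apply Rmax_lub; [|]; assert (0 <= (c ^ 2) ^ (theta + k) * y) by (apply Rmult_le_pos; auto); lra. }
    specialize (Hwnn k). nra.
  - exists (y * Sc' + B * S1'). apply is_series_plusR; apply is_series_mulc; auto. }
set (SV := Series V).
assert (HV : is_series V SV) by (apply Series_correct; auto).
exists (y * Sab' + Mbar * (Sa' - S1') - SV). split.
- apply is_series_Reals.
  eapply is_series_ext; [|apply (is_series_minusR _ _ _ _ HU HV)].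
  intros k. unfold U, V, Hfun.
  assert (E : forall (p q r t u v ww : R), p = t -> q = u -> r = v ->
     y * (p * ww) + Mbar * (q * ww - 1 * ww) - Rmax (r * y) B * ww
     = (t * y + Mbar * (u - 1) - Rmax (v * y) B) * ww) by (intros; subst; ring).
  rewrite pow1. apply E; rewrite pow_mult; reflexivity.
- set (Xm := Rmax X (B / c ^ (2 * theta))).
  set (G := fun k => Xm * ((abar ^ 2) ^ (theta + k) * w k - (c ^ 2) ^ (theta + k) * w k)
            + Mbar * ((a ^ 2) ^ (theta + k) * w k - 1 ^ (theta + k) * w k)).
  assert (HG : is_series G (Xm * (Sab' - Sc') + Mbar * (Sa' - S1'))).
  { apply is_series_plusR; apply is_series_mulc; apply is_series_minusR; auto. }
  assert (HGT := is_series_minusR _ _ _ _ HG (is_series_minusR _ _ _ _ HU HV)).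
  assert (Hnn := series_nonneg _ _ HGT).
  assert (Heq : rsum (S n') (fun j => Q j * P01 j gamma) = Xm * (Sab' - Sc') + Mbar * (Sa' - S1')).
  { unfold Sab', Sc', Sa', S1'.
    rewrite <- !rsum_minus, <- !rsum_scal, <- rsum_plus. apply rsum_ext; intros j _.
    unfold Q. fold Xm. ring. }
  rewrite Heq.
  enough (0 <= Xm * (Sab' - Sc') + Mbar * (Sa' - S1') - (y * Sab' + Mbar * (Sa' - S1') - SV)) by lra.
  apply Hnn. intros k. unfold G, U, V.
  assert (HH := H_bound abar c Mbar B a y X theta (theta + k) Habar0 Hc0 Hc1 HB HX Hy ltac:(lia)).
  unfold Hfun in HH. rewrite !pow_mult in HH.
  assert (HXm : Xm = Rmax X (B / (c ^ 2) ^ theta)) by (unfold Xm; rewrite pow_mult; reflexivity).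
  rewrite <- HXm in HH. rewrite pow1.
  specialize (Hwnn k).
  assert (HH' := Rmult_le_compat_r _ _ _ Hwnn HH).
  lra.
Qed.


End ST.

Theorem mainTheorem7
  (n : nat) (a L c M B : R) (P0 P1 : Mat) (e : Vec)
  (Hn : (1 <= n)%nat)
  (Ha : 1 < Rabs a)
  (Habar0 : 0 < (a + L) ^ 2) (Habar1 : (a + L) ^ 2 < 1)
  (Hc0 : (a + L) ^ 2 < c ^ 2) (Hc1 : c ^ 2 < 1)
  (HM : 0 < M) (HB : 0 < B)
  (HP0 : col_stochastic n P0) (HP1 : col_stochastic n P1)
  (He : forall i, (i < n)%nat -> 0 <= e i <= 1)
  (Hrho : a ^ 2 * spec_radius n (mmul n P1 (diagm e)) < 1)
  (theta : nat) (Htheta : (1 <= theta)%nat)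
  (X : R) (HX : 0 <= X) :
  let abar := a + L in
  let Mbar := M / (a ^ 2 - 1) in
  let d : Vec := fun i => 1 - e i in
  let P1E := mmul n P1 (diagm e) in
  let Z := Zvec n d P1E theta in
  let Q : Vec := fun j =>
    (Z (abar ^ 2) j - Z (c ^ 2) j) * Rmax X (B / c ^ (2 * theta))
    + Mbar * (Z (a ^ 2) j - Z 1 j) in
  let P01 := mmul n (mpow n P0 (theta - 1)) P1 in
  forall (gamma : nat) (y : R), (gamma < n)%nat -> X <= y ->
    exists J : R,
      infinite_sum
        (fun k => Hfun abar c Mbar B a (theta + k) y *
           rsum n (fun i => d i * mmul n (mpow n P1E k) P01 i gamma))
        J
      /\ J <= rsum n (fun j => Q j * P01 j gamma).
Proof. exact (ST.main7 n a L c M B P0 P1 e Hn Ha Habar0 Habar1 Hc0 Hc1 HM HB HP0 HP1 He Hrho theta Htheta X HX). Qed.
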